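(* In any $\{K_3,K_4\}$-decomposition of $K_{18}$ with $\alpha=13$, every vertex $x$ of $K_{18}$ satisfies $\alpha_x\in\{1,4\}$.
   Context: A $\{K_3,K_4\}$-decomposition of $K_v$ is a collection of subgraphs, each isomorphic to $K_3$ or $K_4$ (triples and quadruples), such that every edge of $K_v$ lies in exactly one of them. $\alpha$ is the number of copies of $K_3$ in the decomposition, and for a vertex $x$, $\alpha_x$ is the number of copies of $K_3$ in the decomposition containing $x$. *)

(* Defs.v *)
From mathcomp Require Import all_boot.
Set Implicit Arguments. Unset Strict Implicit. Unset Printing Implicit Defensive.

Definition K34_decomposition (n : nat) (D : {set {set 'I_n}}) : Prop :=
  (forall B, B \in D -> (#|B| == 3) || (#|B| == 4)) /\
  (forall u v : 'I_n, u != v -> #|[set B in D | (u \in B) && (v \in B)]| = 1).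

Definition alpha (n : nat) (D : {set {set 'I_n}}) : nat :=
  #|[set B in D | #|B| == 3]|.

Definition alpha_at (n : nat) (D : {set {set 'I_n}}) (x : 'I_n) : nat :=
  #|[set B in D | (#|B| == 3) && (x \in B)]|.

(* Main.v *)
Require Import Defs.
From mathcomp Require Import all_boot zify.
Set Implicit Arguments. Unset Strict Implicit. Unset Printing Implicit Defensive.

Lemma cardE_sum (T : finType) (P : pred T) : #|[set x | P x]| = \sum_x (P x : nat).
Proof. rewrite -sum1_card big_mkcond /=; apply: eq_bigr => x _; rewrite inE; by case: (P x). Qed.

Lemma sum_pred1 (T : finType) (u : T) (F : T -> nat) : \sum_w ((w == u) * F w) = F u.
Proof. rewrite (bigD1 u) //= eqxx mul1n big1 ?addn0 // => w /negPf ->; by rewrite mul0n. Qed.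

Definition tri (D : {set {set 'I_18}}) B : bool := (B \in D) && (#|B| == 3).
Definition sv (D : {set {set 'I_18}}) v : bool := 4 <= alpha_at D v.

Lemma alpha_at_sum (D : {set {set 'I_18}}) v : alpha_at D v = \sum_B (tri D B && (v \in B) : nat).
Proof. rewrite /alpha_at cardE_sum; apply: eq_bigr => B _; rewrite /tri; by case: (B \in D); case: (#|B| == 3); case: (v \in B). Qed.

Lemma deg (D : {set {set 'I_18}}) v : K34_decomposition D ->
  17 + alpha_at D v = 3 * \sum_B ((B \in D) && (v \in B) : nat).
Proof.
case=> Hsz Hpair.
have H1: \sum_B ((B \in D) && (v \in B)) * (#|B|.-1) = 17.
  transitivity (\sum_B \sum_u ((B \in D) && (v \in B)) * ((u != v) && (u \in B))).
    apply: eq_bigr => B _. rewrite -big_distrr /=. case: (boolP (v \in B)) => vB; last by rewrite andbF.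
    congr (_ * _). rewrite -cardE_sum (cardsD1 v B) vB /= add0n; apply: eq_card => u; by rewrite !inE.
  rewrite exchange_big /=.
  transitivity (\sum_u (u != v : nat)).
    apply: eq_bigr => u _. case: (boolP (u != v)) => uv; last first.
      by apply: big1 => B _; rewrite muln0.
    transitivity #|[set B in D | (u \in B) && (v \in B)]|; last exact: Hpair u v uv.
    rewrite cardE_sum. apply: eq_bigr => B _.
    by case: (B \in D); case: (v \in B); case: (u \in B).
  rewrite -cardE_sum.
  have ->: [set u | u != v] = [set~ v] by apply/setP => u; by rewrite !inE.
  by rewrite cardsC1 card_ord.
have H2 : \sum_B ((B \in D) && (v \in B)) * (#|B|.-1) + \sum_B (tri D B && (v \in B) : nat)
   = 3 * \sum_B ((B \in D) && (v \in B) : nat); last by rewrite alpha_at_sum -H2 H1.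
rewrite big_distrr -big_split /=.
apply: eq_bigr => B _. rewrite /tri.
case: (boolP (B \in D)) => BD /=; last by [].
case: (v \in B) => /=; last by rewrite andbF.
have := Hsz B BD. by case/orP => /eqP ->.
Qed.

Lemma alpha_vals (D : {set {set 'I_18}}) v : K34_decomposition D ->
  [\/ alpha_at D v = 1, alpha_at D v = 4 | alpha_at D v = 7].
Proof.
move=> HD. have H := deg v HD.
have Hle : alpha_at D v <= \sum_B ((B \in D) && (v \in B) : nat).
  rewrite alpha_at_sum. apply: leq_sum => B _. rewrite /tri. by case: (B \in D); case: (#|B| == 3); case: (v \in B).
move: H Hle. set a := alpha_at D v. set d := \sum_B _. move=> H Hle.
have : a <= 7 by lia.
have : a = 1 \/ a = 4 \/ a = 7 \/ a = 0 \/ a = 2 \/ a = 3 \/ a = 5 \/ a = 6 by lia.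
case=> [->|[->|[->|[]]]]; try by constructor. all: lia.
Qed.

Definition kk (D : {set {set 'I_18}}) (B : {set 'I_18}) : nat := \sum_v ((v \in B) && sv D v : nat).

Lemma sumT (D : {set {set 'I_18}}) : alpha D = 13 -> \sum_B (tri D B : nat) = 13.
Proof. move=> H. transitivity (alpha D); last exact: H. rewrite /alpha cardE_sum. by apply: eq_bigr => B _. Qed.

Lemma sum_alpha (D : {set {set 'I_18}}) : alpha D = 13 -> \sum_v alpha_at D v = 39.
Proof.
move=> H. have HT := sumT H.
transitivity (\sum_B (tri D B : nat) * 3); last by rewrite -big_distrl /= HT.
under eq_bigr do rewrite alpha_at_sum.
rewrite exchange_big /=. apply: eq_bigr => B _.
case: (boolP (tri D B)) => tB /=; last by apply: big1 => v _.
have : #|B| = 3 by move: tB; rewrite /tri => /andP [_ /eqP].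
move=> HB. rewrite mul1n. transitivity #|B|; last exact: HB. rewrite -sum1_card [RHS]big_mkcond /=. apply: eq_bigr => v _. by case: (v \in B).
Qed.


Lemma F3 (D : {set {set 'I_18}}) :
  \sum_B tri D B * kk D B = \sum_v sv D v * alpha_at D v.
Proof.
rewrite /kk. under eq_bigr do rewrite big_distrr /=.
rewrite exchange_big /=. apply: eq_bigr => v _.
rewrite alpha_at_sum big_distrr /=. apply: eq_bigr => B _.
by case: (tri D B); case: (v \in B); case: (sv D v).
Qed.

Lemma pair_le1 (D : {set {set 'I_18}}) u w : K34_decomposition D -> u != w ->
  \sum_B (tri D B && (u \in B) && (w \in B) : nat) <= 1.
Proof.
case=> _ Hp uw. apply: (leq_trans _ (eq_leq (Hp u w uw))). rewrite cardE_sum. apply: leq_sum => B _.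
rewrite /tri. by case: (B \in D); case: (#|B| == 3); case: (u \in B); case: (w \in B).
Qed.

Lemma F4 (D : {set {set 'I_18}}) : K34_decomposition D ->
  \sum_B tri D B * (kk D B * kk D B) + \sum_v (sv D v : nat)
  <= (\sum_v (sv D v : nat)) * (\sum_v (sv D v : nat)) + \sum_v sv D v * alpha_at D v.
Proof.
move=> HD.
have E1 : \sum_B tri D B * (kk D B * kk D B) =
   \sum_u \sum_w (sv D u * sv D w) * \sum_B (tri D B && (u \in B) && (w \in B) : nat).
  rewrite /kk. under eq_bigr do rewrite big_distrl /=.
  under eq_bigr do under eq_bigr do rewrite big_distrr /=.
  under eq_bigr do rewrite big_distrr /=.
  under eq_bigr do under eq_bigr do rewrite big_distrr /=.
  rewrite exchange_big /=. apply: eq_bigr => u _.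
  rewrite exchange_big /=. apply: eq_bigr => w _.
  rewrite big_distrr /=. apply: eq_bigr => B _.
  by case: (tri D B); case: (u \in B); case: (w \in B); case: (sv D u); case: (sv D w).
have E2 : \sum_v (sv D v : nat) = \sum_u \sum_w (w == u) * (sv D u * sv D w).
  apply: eq_bigr => u _. rewrite sum_pred1. by case: (sv D u).
have E3 : \sum_v sv D v * alpha_at D v = \sum_u \sum_w (w == u) * (sv D u * sv D w * alpha_at D u).
  apply: eq_bigr => u _. rewrite sum_pred1. by case: (sv D u).
have E4 : (\sum_v (sv D v : nat)) * (\sum_v (sv D v : nat)) = \sum_u \sum_w (sv D u * sv D w).
  rewrite big_distrl /=. apply: eq_bigr => u _. by rewrite big_distrr.
rewrite E1 E4 E3 E2 -big_split -big_split /=. apply: leq_sum => u _.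
rewrite -big_split -big_split /=. apply: leq_sum => w _.
case: (eqVneq w u) => [->|wu].
  rewrite mul1n alpha_at_sum.
  have -> : \sum_B (tri D B && (u \in B) && (u \in B) : nat) = \sum_B (tri D B && (u \in B) : nat).
    apply: eq_bigr => B _. by rewrite -andbA andbb.
  case: (sv D u) => /=; lia.
rewrite !mul0n !addn0.
have uw : u != w by rewrite eq_sym.
have := pair_le1 HD uw.
set X := \sum_B _. move=> HX.
case: (sv D u); case: (sv D w) => /=; lia.
Qed.

Lemma F5 (D : {set {set 'I_18}}) x : K34_decomposition D -> alpha_at D x = 7 ->
  \sum_B (tri D B && (x \in B)) * kk D B <= 6 + \sum_v (sv D v : nat).
Proof.
move=> HD Hx.
have E : \sum_B (tri D B && (x \in B)) * kk D B =
   \sum_w sv D w * \sum_B (tri D B && (x \in B) && (w \in B) : nat).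
  rewrite /kk. under eq_bigr do rewrite big_distrr /=.
  rewrite exchange_big /=. apply: eq_bigr => w _. rewrite big_distrr /=. apply: eq_bigr => B _.
  by case: (tri D B); case: (x \in B); case: (w \in B); case: (sv D w).
rewrite E (bigD1 x) //= [X in _ <= _ + X](bigD1 x) //= addnA.
apply: leq_add.
  have -> : \sum_B (tri D B && (x \in B) && (x \in B) : nat) = alpha_at D x.
    rewrite alpha_at_sum. apply: eq_bigr => B _. by rewrite -andbA andbb.
  rewrite Hx. case: (sv D x); lia.
apply: leq_sum => w wx.
have xw : x != w by rewrite eq_sym.
have := pair_le1 HD xw. set X := \sum_B _. move=> HX.
case: (sv D w) => /=; lia.
Qed.

Lemma kk_le3 (D : {set {set 'I_18}}) B : tri D B -> kk D B <= 3.
Proof.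
rewrite /tri => /andP [_ /eqP HB].
apply: (leq_trans _ (eq_leq HB)). rewrite /kk -sum1_card [X in _ <= X]big_mkcond /=.
apply: leq_sum => v _. by case: (v \in B); case: (sv D v).
Qed.

Lemma kk_ge1 (D : {set {set 'I_18}}) (B : {set 'I_18}) x : x \in B -> sv D x -> 1 <= kk D B.
Proof.
move=> xB sx. rewrite /kk (bigD1 x) //= xB sx /=. lia.
Qed.

Lemma F7 (D : {set {set 'I_18}}) :
  \sum_B tri D B * (5 * kk D B + 2 * (kk D B <= 1)) <= \sum_B tri D B * (kk D B * kk D B + 6).
Proof.
apply: leq_sum => B _. case: (boolP (tri D B)) => tB /=; last by [].
have := kk_le3 tB. rewrite !mul1n. case: (kk D B) => [|[|[|[|k]]]] //.
Qed.

Lemma F6 (D : {set {set 'I_18}}) x : sv D x ->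
  \sum_B (tri D B && (x \in B)) * 2 <=
  \sum_B (tri D B && (x \in B)) * (kk D B <= 1) + \sum_B (tri D B && (x \in B)) * kk D B.
Proof.
move=> sx. rewrite -big_split /=. apply: leq_sum => B _.
case: (boolP (x \in B)) => xB; last by rewrite andbF.
case: (tri D B) => //=. have := kk_ge1 xB sx. case: (kk D B) => [|[|k]] //.
Qed.

Lemma F9 (D : {set {set 'I_18}}) x : K34_decomposition D -> alpha_at D x = 7 ->
  \sum_v alpha_at D v = \sum_v sv D v * alpha_at D v + (18 - \sum_v (sv D v : nat)) /\
  4 * \sum_v (sv D v : nat) + 3 <= \sum_v sv D v * alpha_at D v /\
  \sum_v (sv D v : nat) <= 18.
Proof.
move=> HD Hx.
have H18 : \sum_v (sv D v : nat) + \sum_v (~~ sv D v : nat) = 18.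
  rewrite -big_split /=. transitivity (\sum_(v < 18) 1); last by rewrite sum1_card card_ord.
  apply: eq_bigr => v _. by case: (sv D v).
have E : \sum_v alpha_at D v = \sum_v sv D v * alpha_at D v + \sum_v (~~ sv D v : nat).
  rewrite -big_split /=. apply: eq_bigr => v _.
  rewrite /sv. have := alpha_vals v HD. case=> ->; by [].
have sx : sv D x by rewrite /sv Hx.
have L : 4 * \sum_v (sv D v : nat) + 3 <= \sum_v sv D v * alpha_at D v.
  have L0 : \sum_v (4 * sv D v + (v == x) * (fun _ => 3) v) <= \sum_v sv D v * alpha_at D v.
    apply: leq_sum => v _. case: (eqVneq v x) => [->|vx].
      rewrite sx Hx. by [].
    rewrite /sv /=. have := alpha_vals v HD. case=> ->; by [].
  by rewrite big_split /= sum_pred1 -big_distrr /= in L0.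
split; last split => //; lia.
Qed.

Lemma F7' (D : {set {set 'I_18}}) :
  5 * \sum_B tri D B * kk D B + 2 * \sum_B tri D B * (kk D B <= 1)
  <= \sum_B tri D B * (kk D B * kk D B) + 6 * \sum_B (tri D B : nat).
Proof.
rewrite !big_distrr -!big_split /=. apply: leq_sum => B _.
case: (boolP (tri D B)) => tB /=; last by rewrite !muln0.
have := kk_le3 tB. rewrite !mul1n. case: (kk D B) => [|[|[|[|k]]]] //.
Qed.

Theorem mainTheorem9 (D : {set {set 'I_18}}) :
  K34_decomposition D -> alpha D = 13 ->
  forall x : 'I_18, alpha_at D x = 1 \/ alpha_at D x = 4.
Proof.
move=> HD Ha x.
case: (alpha_vals x HD) => [->|->|Hx]; [by left|by right|exfalso].
have sx : sv D x by rewrite /sv Hx.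
have S39 := sum_alpha Ha.
have [E9 [L9 M9]] := F9 HD Hx.
have E3 := F3 D.
have E4 := F4 HD.
have E7 := F7' D.
have T13 := sumT Ha.
have E5 := F5 HD Hx.
have E6 := F6 sx.
have A7 : \sum_B (tri D B && (x \in B)) * 2 = 14.
  rewrite -big_distrl /=. transitivity (alpha_at D x * 2); last by rewrite Hx.
  rewrite alpha_at_sum. by [].
have Mx : \sum_B (tri D B && (x \in B)) * (kk D B <= 1) <= \sum_B tri D B * (kk D B <= 1).
  apply: leq_sum => B _. by case: (tri D B); case: (x \in B).
move: S39 E9 L9 M9 E3 E4 E7 T13 E5 E6 A7 Mx.
set s := \sum_v (sv D v : nat).
set SA := \sum_v sv D v * alpha_at D v.
set K1 := \sum_B tri D B * kk D B.
set K2 := \sum_B tri D B * (kk D B * kk D B).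
set m := \sum_B tri D B * (kk D B <= 1).
set mx := \sum_B (tri D B && (x \in B)) * (kk D B <= 1).
set Kx := \sum_B (tri D B && (x \in B)) * kk D B.
set T := \sum_B (tri D B : nat).
set Tx := \sum_B (tri D B && (x \in B)) * 2.
set SS := \sum_v alpha_at D v.
move=> S39 E9 L9 M9 E3 E4 E7 T13 E5 E6 A7 Mx.
have hs : s <= 6 by lia.
have : s = 0 \/ s = 1 \/ s = 2 \/ s = 3 \/ s = 4 \/ s = 5 \/ s = 6 by lia.
case=> [hs'|[hs'|[hs'|[hs'|[hs'|[hs'|hs']]]]]]; rewrite hs' in E4 E9 L9 E5; lia.
Qed.
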